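(* Let $G=B(H)$ for some connected graph $H$ with at least one edge. Then $KB_e(G)$ is a cycle, a path, or contains an induced $(n,m)$-necklace with $n\ge 6$ and $m\ge 1$ whose cycle has good neighbours in $KB_e(G)$.
   Context: All graphs are finite, simple and undirected. A biclique of a graph $X$ is a maximal (with respect to inclusion) induced subgraph of $X$ that is a complete bipartite graph $K_{p,q}$ with $p,q\ge 1$; $KB_e(X)$ has one vertex per biclique of $X$, two distinct vertices adjacent iff the bicliques share an edge. The burgeon graph $B(H)$ is obtained by replacing each vertex $v$ of $H$ by a clique $C_v$ on $d(v)$ vertices, whose vertices are in bijection with the neighbours of $v$; for each edge $uv$ of $H$, the vertex of $C_v$ corresponding to $u$ is joined to the vertex of $C_u$ corresponding to $v$; there are no other edges between different cliques. For $n\ge3$, $m\ge1$, the $(n,m)$-necklace is the graph on $n+m$ vertices consisting of an induced cycle $C_n$ and a complete graph $K_m$ such that, for one fixed edge $xy$ of the cycle, every vertex of the $K_m$ is adjacent to $x$ and $y$ and to no other vertex of the cycle. An induced cycle $C=v_0\ldots v_{n-1}$ ($n\ge5$) of a graph $X$ has good neighbours in $X$ if for every vertex $v\in V(X)\setminus V(C)$ and every $i$ (indices mod $n$), $\{v_{i-1},v_{i+1}\}\subseteq N(v)$ implies $v_i\in N(v)$. *)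

(* Defs.v *)
(* Finite simple graphs are symmetric irreflexive relations on finTypes. *)
From mathcomp Require Import all_boot.
Set Implicit Arguments. Unset Strict Implicit. Unset Printing Implicit Defensive.

Section Graphs.
Variable V : finType.
Variable r : rel V.

Definition indep (A : {set V}) : bool :=
  [forall x in A, forall y in A, ~~ r x y].

Definition is_cbip (S : {set V}) : bool :=
  [exists A : {set V},
    [&& A \subset S, A != set0, S :\: A != set0, indep A, indep (S :\: A)
      & [forall x in A, forall y in S :\: A, r x y]]].

Definition biclique (S : {set V}) : bool :=
  is_cbip S && [forall S' : {set V}, (S \subset S') && is_cbip S' ==> (S' == S)].

Definition KBvert := {S : {set V} | biclique S}.

Definition KBrel : rel KBvert := fun S1 S2 =>
  (S1 != S2) &&
  [exists x : V, exists y : V,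
     [&& x \in val S1 :&: val S2, y \in val S1 :&: val S2 & r x y]].

Definition cyc_adj (k i j : nat) : bool := (i.+1 %% k == j) || (j.+1 %% k == i).

Definition is_path : Prop :=
  exists k (f : 'I_k -> V),
    [/\ 0 < k, bijective f &
        forall i j : 'I_k, r (f i) (f j) = ((i.+1 == j) || (j.+1 == i))].

Definition is_cycle : Prop :=
  exists k (f : 'I_k -> V),
    [/\ 2 < k, bijective f &
        forall i j : 'I_k, r (f i) (f j) = cyc_adj k i j].

(* (V, r) contains an induced (n,m)-necklace with n >= 6, m >= 1: induced cycle
   c_0 ... c_{n-1}, clique d_0 ... d_{m-1}, every d_j adjacent exactly to c_0 and
   c_1 on the cycle; moreover the cycle has good neighbours in (V, r). *)
Definition has_good_necklace : Prop :=
  exists n m (c : 'I_n -> V) (d : 'I_m -> V),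
    [/\ 6 <= n, 1 <= m, injective c, injective d &
        (forall i j, c i != d j)] /\
    [/\ (forall i j : 'I_n, r (c i) (c j) = cyc_adj n i j),
        (forall j j' : 'I_m, r (d j) (d j') = (j != j')),
        (forall (i : 'I_n) (j : 'I_m), r (c i) (d j) = (val i <= 1)) &
        (forall v : V, (forall i, v != c i) ->
           forall i j l : 'I_n, val j = i.+1 %% n -> val l = j.+1 %% n ->
             r v (c i) -> r v (c l) -> r v (c j))].

End Graphs.

(* Burgeon graph B(H) of H = (T, e): vertex (v,u) (an arc with e v u) is the
   vertex of the clique C_v corresponding to the neighbour u of v. *)
Definition Bvert (T : finType) (e : rel T) := {p : T * T | e p.1 p.2}.

Definition Brel (T : finType) (e : rel T) : rel (Bvert e) := fun a b =>
  ((val a).1 == (val b).1) && ((val a).2 != (val b).2)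
  || ((val a).1 == (val b).2) && ((val a).2 == (val b).1).
Arguments Brel {T} e.
Arguments KBrel {V} r.

(* Main.v *)
Require Import Defs.
From mathcomp Require Import all_boot zify.
From Stdlib Require Import Classical.
Set Implicit Arguments. Unset Strict Implicit. Unset Printing Implicit Defensive.

Section Deg2.
Variable V : finType.
Variable r : rel V.
Hypothesis rsym : symmetric r.
Hypothesis rirr : irreflexive r.
Hypothesis deg : forall x y1 y2 y3, r x y1 -> r x y2 -> r x y3 ->
  [|| y1 == y2, y1 == y3 | y2 == y3].
Hypothesis rclosed : forall P : {set V},
  (forall x y, x \in P -> r x y -> y \in P) -> forall x, x \in P -> forall y, y \in P.

Definition goodp (x : V) (p : seq V) := path r x p && uniq (x :: p).

Lemma goodp_size x p : goodp x p -> size (x :: p) <= #|V|.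
Proof.
case/andP=> _ /card_uniqP <-; exact: max_card.
Qed.

Lemma extend n x p : #|V| - size (x :: p) <= n -> goodp x p ->
  exists x' p', [/\ goodp x' p', (forall y, r (last x' p') y -> y \in x' :: p')
     & (forall y, r x' y -> y \in x' :: p')].
Proof.
elim: n x p => [|n IH] x p Hn Hg; rewrite /= in Hn.
  have Hs := goodp_size Hg.
  exists x, p; split => // y Hy; apply/negPn/negP => Hn'.
  - have Hg' : goodp x (rcons p y).
      by move: Hg; rewrite /goodp rcons_path -rcons_cons rcons_uniq Hn' Hy => /andP[-> ->].
    have := goodp_size Hg'; rewrite /= size_rcons /=; lia.
  - have Hg' : goodp y (x :: p).
      by move: Hg; rewrite /goodp /= (rsym y x) Hy; move: Hn'; rewrite /= => -> /andP[-> ->].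
    have := goodp_size Hg'; rewrite /=; lia.
case: (boolP [exists y, r (last x p) y && (y \notin x :: p)]).
  case/existsP=> y /andP[Hy Hn'].
  have Hg' : goodp x (rcons p y).
    by move: Hg; rewrite /goodp rcons_path -rcons_cons rcons_uniq Hn' Hy => /andP[-> ->].
  apply: (IH _ _ _ Hg'); move: Hn; rewrite /= size_rcons; lia.
move=> Hne1.
case: (boolP [exists y, r x y && (y \notin x :: p)]).
  case/existsP=> y /andP[Hy Hn'].
  have Hg' : goodp y (x :: p).
    by move: Hg; rewrite /goodp /= (rsym y x) Hy; move: Hn'; rewrite /= => -> /andP[-> ->].
  apply: (IH _ _ _ Hg'); move: Hn; rewrite /=; lia.
move=> Hne2; exists x, p; split => // y Hy; apply/negPn/negP => Hn'.
  by move/existsP: Hne1; apply; exists y; rewrite Hy Hn'.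
by move/existsP: Hne2; apply; exists y; rewrite Hy Hn'.
Qed.


Lemma deg2_main (x0 : V) : is_path r \/ is_cycle r.
Proof.
have Hg0 : goodp x0 [::] by rewrite /goodp /=.
have [x [p [Hg Hl Hh]]] := @extend #|V| x0 [::] (leq_subr _ _) Hg0.
case/andP: Hg => Hp Hu.
set s := x :: p in Hl Hh Hu.
set k := size s.
have Hk : 0 < k by [].
have Hadj : forall i, i.+1 < k -> r (nth x s i) (nth x s i.+1).
  move=> i Hi; move/(pathP x): Hp => Hp; apply: Hp; rewrite /k /= in Hi; lia.
have Hadj' : forall i, i.+1 < k -> r (nth x s i.+1) (nth x s i).
  by move=> i Hi; rewrite rsym; apply: Hadj.
have Hdist : forall i j, i < k -> j < k -> (nth x s i == nth x s j) = (i == j).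
  by move=> i j Hi Hj; rewrite nth_uniq.
have Hmem : forall z, z \in s.
  move=> z; suff : z \in [set z | z \in s] by rewrite in_set.
  apply: (@rclosed _ _ x); last by rewrite in_set /s mem_head.
    move=> y z'; rewrite !in_set => Hy Hyz.
    have Hi : index y s < k by rewrite index_mem.
    have Ey := nth_index x Hy.
    case: (ltngtP (index y s) 0) => [//|Hi0|Hi0].
      case: (ltngtP (index y s) k.-1) => [Hi1|Hi1|Hi1]; last first.
      - have E : last x p = y by rewrite -Ey Hi1 /k nth_last.
        by apply: Hl; rewrite E.
      - rewrite /k in Hi Hi1; lia.
      have H1 : r y (nth x s (index y s).-1).
        rewrite -{1}Ey -{1}(prednK Hi0); apply: Hadj'; rewrite prednK //.
      have H2 : r y (nth x s (index y s).+1).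
        rewrite -{1}Ey; apply: Hadj; rewrite /k in Hi Hi1 *; lia.
      have Hm1 : (index y s).-1 < k by lia.
      have Hm2 : (index y s).+1 < k by lia.
      case/or3P: (deg H1 H2 Hyz).
      + rewrite Hdist; first lia; rewrite /k in Hi Hi1 *; lia.
      + by move/eqP=> <-; apply: mem_nth; exact: Hm1.
      + by move/eqP=> <-; apply: mem_nth; exact: Hm2.
    have E : x = y by rewrite -Ey Hi0.
    by apply: Hh; rewrite E.
have Hkey : forall i j, i < j -> j < k -> r (nth x s i) (nth x s j) ->
    (j == i.+1) || (i == 0) && (j == k.-1).
  move=> i j Hij Hj Hr; apply/negPn/negP => Hn.
  case: (posnP i) => Hi0.
    subst i.
    have Hj1 : j.+1 < k by move: Hn; rewrite /k in Hj *; case: eqP; lia.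
    have H1 : r (nth x s j) (nth x s j.-1).
      rewrite -{1}(prednK Hij); apply: Hadj'; rewrite prednK //; lia.
    have H2 : r (nth x s j) (nth x s j.+1) by apply: Hadj.
    have H3 : r (nth x s j) (nth x s 0) by rewrite rsym.
    case/or3P: (deg H1 H2 H3); rewrite Hdist; try lia; move: Hn; case: eqP; lia.
  have H1 : r (nth x s i) (nth x s i.-1).
    rewrite -{1}(prednK Hi0); apply: Hadj'; rewrite prednK //; lia.
  have H2 : r (nth x s i) (nth x s i.+1) by apply: Hadj; lia.
  case/or3P: (deg H1 H2 Hr); rewrite Hdist; try lia; move: Hn; case: eqP; lia.
have idx_lt : forall z, index z s < k by move=> z; rewrite index_mem.
pose f := fun i : 'I_k => nth x s i.
pose g := fun z => Ordinal (idx_lt z).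
have Hbij : bijective f.
  exists g.
    move=> i; apply: val_inj; exact: index_uniq (ltn_ord i) Hu.
  by move=> z; rewrite /f /= nth_index.
case: (boolP (r (nth x s 0) (nth x s k.-1) && (2 < k))) => [/andP[Hb Hk2]|Hb].
  right; exists k, f; split => //.
  have Hlt : forall i j : 'I_k, i < j -> r (f i) (f j) = cyc_adj k i j.
    move=> [i Hi] [j Hj] /= Hij; rewrite /f /cyc_adj /=.
    apply/idP/idP.
      move/(Hkey _ _ Hij Hj)=> /orP[/eqP Ej|/andP[/eqP Ei /eqP Ej]]; subst.
        by rewrite (modn_small Hj) eqxx.
      by rewrite prednK // modnn eqxx orbT.
    case/orP.
      rewrite modn_small; last lia.
      by move/eqP <-; apply: Hadj; lia.
    have [Hj1|Hj1] : j.+1 < k \/ j.+1 = k by lia.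
      rewrite modn_small //; lia.
    rewrite Hj1 modnn => /eqP Hi0; subst i.
    by have -> : j = k.-1 by lia.
  move=> i j; case: (ltngtP i j) => Hij.
  - exact: Hlt.
  - by rewrite rsym Hlt // /cyc_adj orbC.
  - have -> : j = i by apply: val_inj.
    rewrite /f rirr /cyc_adj orbb; case: i {Hij} => i Hi /=.
    have [Hi1|Hi1] : i.+1 < k \/ i.+1 = k by lia.
      rewrite modn_small //; lia.
    rewrite Hi1 modnn; apply/esym/negbTE; lia.
left; exists k, f; split => //.
have Hlt : forall i j : 'I_k, i < j -> r (f i) (f j) = (i.+1 == j) || (j.+1 == i).
  move=> [i Hi] [j Hj] /= Hij; rewrite /f /=.
  apply/idP/idP.
    move=> Hr; move/(Hkey _ _ Hij Hj): (Hr) => /orP[/eqP->|/andP[/eqP Hi0 /eqP Hj0]].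
      by rewrite eqxx.
    subst i j; move: Hb; rewrite Hr /=; rewrite -ltnNge ltnS => Hk2.
    rewrite /k /s /= in Hk2 Hij; apply/orP; left; apply/eqP; lia.
  case/orP => /eqP Hj0; last lia.
  by subst j; apply: Hadj.
move=> i j; case: (ltngtP i j) => Hij.
- exact: Hlt.
- by rewrite rsym Hlt // orbC.
- have -> : j = i by apply: val_inj.
  rewrite /f rirr; apply/esym/norP; split; apply/negP => /eqP; lia.
Qed.

End Deg2.

Section BH.
Variable T : finType.
Variable e : rel T.
Hypothesis e_sym : symmetric e.
Hypothesis e_irr : irreflexive e.

Ltac bh := repeat match goal with
  | H : is_true (_ && _) |- _ => let H1 := fresh "H" in let H2 := fresh "H" in case/andP: H => H1 H2
  | H : is_true (_ || _) |- _ => case/orP: H => H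
  | H : is_true ((_, _) == (_, _)) |- _ => rewrite xpair_eqE in H
  | H : is_true (?x != ?x) |- _ => by rewrite eqxx in H
  | H : ?x <> ?x |- _ => by case: H
  | H : is_true (e ?x ?x) |- _ => by rewrite e_irr in H
  | H : is_true (~~ (_ || _)) |- _ => rewrite negb_or in H
  | H : is_true (~~ (_ && _)) |- _ => rewrite negb_and in H
  | H : is_true (~~ ~~ _) |- _ => rewrite negbK in H
  | H : is_true (?x == ?y) |- _ => move/eqP: H => H; first [subst x | subst y]
  | H : is_true false |- _ => by []
  end.

Ltac bfin := bh; repeat (first [done | case: eqP => //= ?; subst; bh]).

Ltac dB a := let a1 := fresh a "1" in let a2 := fresh a "2" in let ha := fresh "h" a in
  case: a => [[a1 a2] /= ha].

Lemma Brel_irr (a : Bvert e) : Brel e a a = false.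
Proof. dB a; rewrite /Brel /=; bfin. Qed.

Lemma Brel_sym (a b : Bvert e) : Brel e a b = Brel e b a.
Proof. dB a; dB b; rewrite /Brel /=; apply/idP/idP; bfin. Qed.

Definition partner (a : Bvert e) := ((val a).2, (val a).1).

Lemma Nlem (a x y : Bvert e) : Brel e a x -> Brel e a y -> x != y -> ~~ Brel e x y ->
  (val y == partner a) && ((val x).1 == (val a).1) ||
  (val x == partner a) && ((val y).1 == (val a).1).
Proof.
dB a; dB x; dB y; rewrite /Brel /partner /= => H1 H2 H3 H4.
have {H3}H3 : (x1, x2) != (y1, y2).
  by apply: contra H3 => /eqP [E1 E2]; subst; apply/eqP; congr exist; apply: bool_irrelevance.
move: H3; rewrite xpair_eqE => H3.
bfin.
Qed.

Lemma Beq (a b : Bvert e) : (a == b) = ((val a).1 == (val b).1) && ((val a).2 == (val b).2).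
Proof. by rewrite -val_eqE -xpair_eqE -!surjective_pairing. Qed.

Lemma N3 (a x y z : Bvert e) : Brel e a x -> Brel e a y -> Brel e a z ->
  x != y -> x != z -> y != z -> ~~ Brel e x y -> ~~ Brel e x z -> ~~ Brel e y z -> False.
Proof.
rewrite !Beq; dB a; dB x; dB y; dB z; rewrite /Brel /= => *; bfin.
Qed.

Lemma C4 (a d b c : Bvert e) : Brel e a b -> Brel e a c -> Brel e d b -> Brel e d c ->
  a != d -> b != c -> ~~ Brel e a d -> ~~ Brel e b c -> False.
Proof.
rewrite !Beq; dB a; dB b; dB c; dB d; rewrite /Brel /= => *; bfin.
Qed.

Lemma cbip_side (S : {set Bvert e}) : is_cbip (Brel e) S ->
  exists A : {set Bvert e}, exists a b, [/\ a \in S, b \in S, a \in A, b \notin A &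
    forall x y, x \in S -> y \in S -> Brel e x y = ((x \in A) != (y \in A))].
Proof.
case/existsP => A /and5P[HAS HA0 HB0 HiA /andP[HiB Hc]].
case/set0Pn: HA0 => a Ha; case/set0Pn: HB0 => b; rewrite inE => /andP[Hb HbS].
exists A, a, b; split => //; first exact: (subsetP HAS).
have Hc' : forall x y, x \in A -> y \in S -> y \notin A -> Brel e x y.
  move=> x y Hx Hy Hy'; have := forall_inP Hc x Hx => /forall_inP; apply.
  by rewrite inE Hy Hy'.
move=> x y Hx Hy; case: (boolP (x \in A)) => HxA; case: (boolP (y \in A)) => HyA /=.
- apply/negbTE; have := forall_inP HiA x HxA => /forall_inP; apply; done.
- by rewrite Hc'.
- by rewrite Brel_sym Hc'.
- apply/negbTE; have := forall_inP HiB x; rewrite inE HxA Hx => /(_ isT) /forall_inP; apply.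
  by rewrite inE HyA.
Qed.

Lemma same1_ne2 (a b : Bvert e) : Brel e a b -> (val b).1 == (val a).1 -> (val a).2 != (val b).2.
Proof. dB a; dB b; rewrite /Brel /= => *; bfin. Qed.

Lemma shape_core (S : {set Bvert e}) (sd : Bvert e -> bool) (a b c : Bvert e) :
  (forall x y, x \in S -> y \in S -> Brel e x y = (sd x != sd y)) ->
  a \in S -> b \in S -> c \in S -> Brel e a b -> c != a -> c != b -> sd c = sd b ->
  exists x y z, [&& (val x).1 == (val y).1, (val x).2 != (val y).2 & val z == partner x]
     /\ S = [set x; y; z].
Proof.
move=> Hsd Ha Hb Hc Hab Hca Hcb Hsc.
have Hsab : sd a != sd b by rewrite -Hsd.
have Hac : Brel e a c by rewrite Hsd // Hsc.
have Hbc : ~~ Brel e b c by rewrite Hsd // Hsc eqxx.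
have Hbc' : b != c by rewrite eq_sym.
have HS : forall d, d \in S -> [|| d == a, d == b | d == c].
  move=> d Hd; apply/negPn/negP; rewrite !negb_or => /and3P[Hda Hdb Hdc].
  case: (boolP (sd d == sd b)) => Hsd'.
  - apply: (N3 (a:=a) (x:=b) (y:=c) (z:=d)) => //; try by rewrite eq_sym.
    + by rewrite Hsd // (eqP Hsd').
    + by rewrite Hsd // (eqP Hsd') eqxx.
    + by rewrite Hsd // (eqP Hsd') Hsc eqxx.
  - have Hsda : sd d = sd a by move: Hsab Hsd'; case: (sd a); case: (sd b); case: (sd d).
    apply: (C4 (a:=a) (d:=d) (b:=b) (c:=c)) => //; rewrite 1?eq_sym //.
    + by rewrite Hsd // Hsda.
    + by rewrite Hsd // Hsda Hsc.
    + by rewrite Hsd // Hsda eqxx.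
have Hset : forall x y z, x \in S -> y \in S -> z \in S ->
    (forall d, d \in S -> [|| d == x, d == y | d == z]) -> S = [set x; y; z].
  move=> x y z Hx Hy Hz HH; apply/setP => d; rewrite !inE -orbA; apply/idP/idP; first exact: HH.
  by case/or3P => /eqP->.
case/orP: (Nlem Hab Hac Hbc' Hbc) => /andP[H1 H2].
- exists a, b, c; split; last by apply: Hset.
  by rewrite eq_sym H2 /= H1 andbT; apply: same1_ne2.
- exists a, c, b; split; last by apply: Hset => // d /HS; rewrite !orbA -(orbA (d == a)) (orbC (d == b)) orbA.
  by rewrite eq_sym H2 /= H1 andbT; apply: same1_ne2.
Qed.

Lemma cbip_shape (S : {set Bvert e}) : is_cbip (Brel e) S ->
  (exists a b, Brel e a b /\ S = [set a; b]) \/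
  (exists x y z, [&& (val x).1 == (val y).1, (val x).2 != (val y).2 & val z == partner x]
     /\ S = [set x; y; z]).
Proof.
case/cbip_side => A [a [b [Ha Hb HaA HbA Hsd]]].
have Hab : Brel e a b by rewrite Hsd // HaA (negbTE HbA).
case: (boolP [exists c in S, (c != a) && (c != b)]).
  case/exists_inP => c Hc /andP[Hca Hcb]; right.
  case: (boolP (c \in A)) => HcA.
    apply: (shape_core (sd := fun x => x \in A) (a := b) (b := a) (c := c)) => //.
    - by rewrite Brel_sym.
    - by rewrite HcA HaA.
  apply: (shape_core (sd := fun x => x \in A) (a := a) (b := b) (c := c)) => //.
  by rewrite (negbTE HcA) (negbTE HbA).
move=> Hn; left; exists a, b; split => //; apply/setP => d; rewrite !inE.
apply/idP/idP; last by case/orP => /eqP->.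
move=> Hd; apply/negPn/negP; rewrite negb_or => Hd'; move/exists_inP: Hn; apply.
by exists d.
Qed.

Definition betaS (v u w : T) : {set Bvert e} :=
  [set x | (val x == (v, u)) || (val x == (v, w)) || (val x == (u, v))].
Definition pairS (v u : T) : {set Bvert e} :=
  [set x | (val x == (v, u)) || (val x == (u, v))].

Definition mkA (v u : T) (h : e v u) : Bvert e := exist _ (v, u) h.

Lemma val_mkA v u (h : e v u) : val (mkA h) = (v, u). Proof. by []. Qed.

Lemma eq_mkA (x : Bvert e) v u (h : e v u) : (x == mkA h) = (val x == (v, u)).
Proof. by rewrite -val_eqE. Qed.

Lemma triple_beta (x y z : Bvert e) :
  [&& (val x).1 == (val y).1, (val x).2 != (val y).2 & val z == partner x] ->
  [set x; y; z] = betaS (val x).1 (val x).2 (val y).2.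
Proof.
case/and3P => H1 H2 H3; apply/setP => d; rewrite !inE -!val_eqE (eqP H3) /partner.
move: H1 H2 H3; dB x; dB y; dB z; rewrite /= => /eqP <- _ _.
done.
Qed.

Lemma cards3_le (x y z : Bvert e) : #|[set x; y; z]| <= 3.
Proof. rewrite setUC cardsU1 cards2; by case: (z \notin _); case: (x != y). Qed.

Section Valid.
Variables (v u w : T) (hu : e v u) (hw : e v w) (huw : u != w).
Let hu' : e u v := etrans (e_sym u v) hu.

Lemma beta_as_triple : betaS v u w = [set mkA hu; mkA hw; mkA hu'].
Proof.
rewrite triple_beta //= eqxx /= huw /=; apply/eqP; reflexivity.
Qed.

Lemma beta_card : #|betaS v u w| = 3.
Proof.
have hvu : v != u by apply: contraTneq hu => ->; rewrite e_irr.
rewrite beta_as_triple setUC cardsU1 cards2 !inE !eq_mkA /= !xpair_eqE !eqxx /= (negbTE huw).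
by rewrite (negbTE hvu) eq_sym (negbTE hvu) /=.
Qed.

Lemma beta_cbip : is_cbip (Brel e) (betaS v u w).
Proof.
apply/existsP; exists [set x | val x == (v, u)].
apply/and5P; split.
- by apply/subsetP => x; rewrite !inE => ->.
- by apply/set0Pn; exists (mkA hu); rewrite inE.
- by apply/set0Pn; exists (mkA hw); rewrite !inE /= !xpair_eqE !eqxx (eq_sym w u) (negbTE huw) /=.
- apply/forall_inP => x Hx; apply/forall_inP => y Hy; move: Hx Hy; rewrite !inE.
  dB x; dB y; rewrite /Brel /= => *; bfin.
apply/andP; split.
- apply/forall_inP => x Hx; apply/forall_inP => y Hy; move: Hx Hy huw; rewrite !inE.
  dB x; dB y; rewrite /Brel /= => *; bfin.
- apply/forall_inP => x Hx; apply/forall_inP => y Hy; move: Hx Hy huw; rewrite !inE.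
  dB x; dB y; rewrite /Brel /= => *; bfin.
Qed.

Lemma beta_biclique : biclique (Brel e) (betaS v u w).
Proof.
apply/andP; split; first exact: beta_cbip.
apply/forallP => S'; apply/implyP => /andP[Hsub Hc].
case/cbip_shape: Hc => [[a [b [_ HS]]]|[x [y [z [_ HS]]]]]; rewrite HS in Hsub *.
  by have := subset_leq_card Hsub; rewrite beta_card cards2; case: (a != b).
by rewrite eq_sym eqEcard Hsub beta_card cards3_le.
Qed.

End Valid.

Lemma biclique_max (S S' : {set Bvert e}) : biclique (Brel e) S -> S \subset S' ->
  is_cbip (Brel e) S' -> S' = S.
Proof.
case/andP => _ /forallP H Hsub Hc; apply/eqP; have := H S'; rewrite Hsub Hc; exact.
Qed.

Lemma biclique_char (S : {set Bvert e}) : biclique (Brel e) S ->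
  (exists v u w, [/\ e v u, e v w, u != w & S = betaS v u w]) \/
  (exists v u, [/\ e v u, (forall x, e v x -> x = u), (forall x, e u x -> x = v)
                  & S = pairS v u]).
Proof.
move=> HB; have HB' := HB; case/andP: HB' => Hc _.
case/cbip_shape: Hc => [[a [b [Hab HS]]]|[x [y [z [Hxyz HS]]]]]; last first.
  left; exists (val x).1, (val x).2, (val y).2; split.
  - exact: (valP x).
  - case/and3P: Hxyz => /eqP -> _ _; exact: (valP y).
  - by case/and3P: Hxyz.
  - by rewrite HS triple_beta.
move: Hab HS; dB a; dB b; rewrite /Brel /= => Hab HS.
have Hmem : forall d, (d \in S) = (val d == (a1, a2)) || (val d == (b1, b2)).
  by move=> d; rewrite HS !inE -!val_eqE.
have ha' : e a2 a1 by rewrite e_sym.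
have Ha12 : a1 != a2 by apply/negP => /eqP E; move: (ha); rewrite E e_irr.
case/orP: Hab => /andP[/eqP E1 H2].
  subst b1.
  have Hsub : S \subset betaS a1 a2 b2.
    by apply/subsetP => d; rewrite Hmem !inE => /orP[->|->]; rewrite ?orbT.
  have := biclique_max HB Hsub (beta_cbip ha hb H2) => Heq.
  have : mkA ha' \in betaS a1 a2 b2 by rewrite !inE eqxx !orbT.
  rewrite Heq Hmem /= !xpair_eqE (eq_sym a2 a1) (negbTE Ha12) /=.
  done.
move/eqP: H2 => E2; subst b1 b2.
right; exists a1, a2; split => //.
- move=> x hx; apply/eqP/negPn/negP => Hx.
  have Hsub : S \subset betaS a1 a2 x.
    by apply/subsetP => d; rewrite Hmem !inE => /orP[->|->]; rewrite ?orbT.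
  have Hx' : a2 != x by rewrite eq_sym.
  have := biclique_max HB Hsub (beta_cbip ha hx Hx') => Heq.
  have : mkA hx \in betaS a1 a2 x by rewrite !inE eqxx !orbT.
  rewrite Heq Hmem /= !xpair_eqE eqxx /= (negbTE Hx) /=.
  by move: Ha12 => ? ?; bfin.
- move=> x hx; apply/eqP/negPn/negP => Hx.
  have Hsub : S \subset betaS a2 a1 x.
    by apply/subsetP => d; rewrite Hmem !inE => /orP[->|->]; rewrite ?orbT.
  have Hx' : a1 != x by rewrite eq_sym.
  have := biclique_max HB Hsub (beta_cbip ha' hx Hx') => Heq.
  have : mkA hx \in betaS a2 a1 x by rewrite !inE eqxx !orbT.
  rewrite Heq Hmem /= !xpair_eqE eqxx /= (negbTE Hx) /=.
  by move: Ha12 => ? ?; bfin.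
- by apply/setP => d; rewrite Hmem !inE.
Qed.

Lemma conn_closed (e_conn : forall x y : T, connect e x y) (X : {set T}) :
  (forall x y, x \in X -> e x y -> y \in X) -> forall x y, x \in X -> y \in X.
Proof.
move=> HX x y Hx; have Hc : closed e X.
  by apply: (intro_closed (sym_connect_sym e_sym)) => a b Hab Ha; exact: HX Ha Hab.
by rewrite -(closed_connect Hc (e_conn x y)).
Qed.

Definition adjc (v u w v' u' w' : T) :=
  ((v, u, w) != (v', u', w')) &&
  [|| (v == v') && (u == u'), (v == u') && (u == v') | [&& v == v', u == w' & w == u']].

Lemma e_neq v u : e v u -> v != u.
Proof. by apply: contraTneq => ->; rewrite e_irr. Qed.

Lemma beta_inj v u w v' u' w' : e v u -> e v w -> u != w -> e v' u' -> e v' w' -> u' != w' ->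
  (betaS v u w == betaS v' u' w') = ((v, u, w) == (v', u', w')).
Proof.
move=> hu hw huw hu' hw' huw'.
apply/idP/idP; last by move/eqP => [-> -> ->].
move/eqP => E.
have hvu := e_neq hu; have hvw := e_neq hw; have hvu' := e_neq hu'; have hvw' := e_neq hw'.
have hu1 : e u v by rewrite e_sym.
have M : forall x : Bvert e, x \in betaS v u w -> x \in betaS v' u' w' by move=> x; rewrite E.
have := M (mkA hu); have := M (mkA hw); have := M (mkA hu1).
rewrite !inE !eqxx /= !orbT => /(_ isT) H1 /(_ isT) H2 /(_ isT) H3.
move: H1 H2 H3 huw huw' hvu hvw hvu' hvw'; rewrite !xpair_eqE => *; bfin.
Qed.

Lemma KBrel_sym (V : finType) (r : rel V) : symmetric (KBrel r).
Proof. by move=> S1 S2; rewrite /KBrel eq_sym setIC. Qed.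

Lemma KBrel_irr (V : finType) (r : rel V) : irreflexive (KBrel r).
Proof. by move=> S; rewrite /KBrel eqxx. Qed.

Lemma beta_adj (S1 S2 : KBvert (Brel e)) v u w v' u' w' :
  e v u -> e v w -> u != w -> e v' u' -> e v' w' -> u' != w' ->
  val S1 = betaS v u w -> val S2 = betaS v' u' w' ->
  KBrel (Brel e) S1 S2 = adjc v u w v' u' w'.
Proof.
move=> hu hw huw hu' hw' huw' E1 E2.
rewrite /KBrel /adjc -val_eqE E1 E2 beta_inj //; congr andb.
have hvu := e_neq hu; have hvw := e_neq hw; have hvu' := e_neq hu'; have hvw' := e_neq hw'.
apply/idP/idP.
  case/existsP => x /existsP [y /and3P[Hx Hy Hxy]].
  move: Hx Hy Hxy huw huw' hvu hvw hvu' hvw'; rewrite !inE /Brel.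
  dB x; dB y; rewrite !xpair_eqE => *; bfin.
have hu1 : e u v by rewrite e_sym.
case/or3P.
- case/andP => /eqP E3 /eqP E4; subst v' u'.
  apply/existsP; exists (mkA hu); apply/existsP; exists (mkA hu1).
  by rewrite !inE /Brel /= !eqxx /= ?orbT ?andbT; bfin.
- case/andP => /eqP E3 /eqP E4; subst v' u'.
  apply/existsP; exists (mkA hu); apply/existsP; exists (mkA hu1).
  by rewrite !inE /Brel /= !eqxx /= ?orbT ?andbT; bfin.
- case/and3P => /eqP E3 /eqP E4 /eqP E5; subst v' u' w'.
  apply/existsP; exists (mkA hu); apply/existsP; exists (mkA hw).
  by rewrite !inE /Brel /= !eqxx /= ?orbT ?andbT; bfin.
Qed.

End BH.

Ltac bh3 := repeat match goal with
  | H : is_true (_ && _) |- _ => let H1 := fresh "H" in let H2 := fresh "H" in case/andP: H => H1 H2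
  | H : is_true (_ || _) |- _ => case/orP: H => H
  | H : is_true ((_, _) == (_, _)) |- _ => rewrite xpair_eqE in H
  | H : is_true (?x != ?x) |- _ => by rewrite eqxx in H
  | H : ?x <> ?x |- _ => by case: H
  | H : is_true (?r ?x ?x), I : irreflexive ?r |- _ => by rewrite I in H
  | H : is_true (~~ (_ || _)) |- _ => rewrite negb_or in H
  | H : is_true (~~ (_ && _)) |- _ => rewrite negb_and in H
  | H : is_true (~~ ~~ _) |- _ => rewrite negbK in H
  | H : is_true (?x == ?y) |- _ => move/eqP: H => H; first [subst x | subst y]
  | H : is_true false |- _ => by []
  end.
Ltac bfin3 := bh3; repeat (first [done | case: eqP => //= ?; subst; bh3]).

Section Main.
Variable T : finType.
Variable e : rel T.
Hypothesis e_sym : symmetric e.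
Hypothesis e_irr : irreflexive e.
Hypothesis e_conn : forall x y : T, connect e x y.

Local Notation KB := (KBvert (Brel e)).
Local Notation betaS := (@betaS T e).

Definition valid v u w := [&& e v u, e v w & u != w].

Lemma validP v u w : valid v u w -> [/\ e v u, e v w & u != w].
Proof. by case/and3P. Qed.

Lemma all_beta (Hex : exists v u w, valid v u w) (S : KB) :
  exists v u w, valid v u w /\ val S = betaS v u w.
Proof.
case: (biclique_char e_sym e_irr (valP S)) => [[v [u [w [hu hw huw ->]]]]|].
  by exists v, u, w; rewrite /valid hu hw huw.
case=> v [u [hu Hv Hu _]]; exfalso.
case: Hex => v0 [u0 [w0 /and3P[h1 h2 h3]]].
have HX := @conn_closed T e e_sym e_conn [set v; u].
have Hcl : forall x y, x \in [set v; u] -> e x y -> y \in [set v; u].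
  move=> x y; rewrite !inE => /orP[/eqP->|/eqP->] hxy.
  - by rewrite (Hv _ hxy) eqxx orbT.
  - by rewrite (Hu _ hxy) eqxx.
have Hv0 : v0 \in [set v; u] by apply: (HX Hcl v); rewrite !inE eqxx.
move: Hv0; rewrite !inE => /orP[/eqP E|/eqP E]; subst v0.
- by move: h3; rewrite (Hv _ h1) (Hv _ h2) eqxx.
- by move: h3; rewrite (Hu _ h1) (Hu _ h2) eqxx.
Qed.

Definition mkB (D : KB) v u w : KB := insubd D (betaS v u w).

Lemma val_mkB D v u w : valid v u w -> val (mkB D v u w) = betaS v u w.
Proof. by case/and3P => h1 h2 h3; rewrite insubdK //; apply: beta_biclique. Qed.

Lemma mkB_eq (S : KB) D v u w : valid v u w -> val S = betaS v u w -> S = mkB D v u w.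
Proof. by move=> Hv E; apply: val_inj; rewrite val_mkB. Qed.

Lemma adj_mkB D v u w v' u' w' : valid v u w -> valid v' u' w' ->
  KBrel (Brel e) (mkB D v u w) (mkB D v' u' w') = adjc v u w v' u' w'.
Proof.
move=> H1 H2; have E1 := val_mkB D H1; have E2 := val_mkB D H2.
case/and3P: H1 => ? ? ?; case/and3P: H2 => ? ? ?.
exact: beta_adj E1 E2.
Qed.

Lemma eq_mkB D v u w v' u' w' : valid v u w -> valid v' u' w' ->
  (mkB D v u w == mkB D v' u' w') = ((v, u, w) == (v', u', w')).
Proof.
move=> H1 H2; rewrite -val_eqE (val_mkB D H1) (val_mkB D H2).
case/and3P: H1 => ? ? ?; case/and3P: H2 => ? ? ?; exact: beta_inj.
Qed.

Lemma adj_val (S1 S2 : KB) v u w v' u' w' : valid v u w -> valid v' u' w' ->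
  val S1 = betaS v u w -> val S2 = betaS v' u' w' ->
  KBrel (Brel e) S1 S2 = adjc v u w v' u' w'.
Proof.
move=> H1 H2 E1 E2; case/and3P: H1 => ? ? ?; case/and3P: H2 => ? ? ?.
exact: beta_adj E1 E2.
Qed.

Section Closure.
Variable D : KB.
Variable P : {set KB}.
Hypothesis HP : forall x y, x \in P -> KBrel (Brel e) x y -> y \in P.
Local Notation inP v u w := (mkB D v u w \in P).

Lemma move_Q1 v u w w' : valid v u w -> valid v u w' -> inP v u w -> inP v u w'.
Proof.
move=> H1 H2 Hin; case: (eqVneq w w') => [<- //|Hww].
by apply: HP Hin _; rewrite adj_mkB // /adjc !xpair_eqE !eqxx /= Hww.
Qed.

Lemma move_R v u w : valid v u w -> inP v u w -> inP v w u.
Proof.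
move=> H1 Hin; have H2 : valid v w u.
  by case/and3P: H1 => ? ? ?; rewrite /valid eq_sym; apply/and3P.
apply: HP Hin _; rewrite adj_mkB // /adjc !xpair_eqE !eqxx /=.
by case/and3P: H1 => _ _ H3; rewrite !orbT andbT; apply/negP => /andP[/eqP E _]; rewrite E eqxx in H3.
Qed.

Lemma move_Q2 v u w x : valid v u w -> valid u v x -> inP v u w -> inP u v x.
Proof.
move=> H1 H2 Hin; apply: HP Hin _; rewrite adj_mkB // /adjc !xpair_eqE !eqxx /=.
case/and3P: H1 => hu _ _; have := e_neq e_irr hu => Hvu.
by rewrite (negbTE Hvu).
Qed.

Lemma local_move v u w u' w' : valid v u w -> valid v u' w' -> inP v u w -> inP v u' w'.
Proof.
move=> H1 H2 Hin; case: (eqVneq u u') => [Eu|Hu].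
  by subst u'; apply: move_Q1 H1 H2 Hin.
case/and3P: (H1) => hu hw huw; case/and3P: (H2) => hu' hw' huw'.
have V1 : valid v u u' by rewrite /valid hu hu' Hu.
have V2 : valid v u' u by rewrite /valid hu hu' eq_sym Hu.
have S1 := move_Q1 H1 V1 Hin.
have S2 := move_R V1 S1.
exact: move_Q1 V2 H2 S2.
Qed.

Definition Vp z := [exists u, exists w, valid z u w && inP z u w].

Lemma Vp_all z u w : Vp z -> valid z u w -> inP z u w.
Proof.
case/existsP => u0 /existsP [w0 /andP[H0 Hin]] Hv; exact: local_move H0 Hv Hin.
Qed.

Lemma Vp_step y z z' : Vp y -> e y z -> e z z' -> z' != y -> Vp z.
Proof.
move=> Hy hyz hzz' Hz'.
have [w' [hw' Hw']] : exists w', e y w' /\ z != w'.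
  case/existsP: (Hy) => u0 /existsP [w0 /andP[/and3P[h1 h2 h3] _]].
  case: (eqVneq z u0) => [Ez|Hz]; last by exists u0.
  by exists w0; split => //; rewrite Ez.
have V1 : valid y z w' by rewrite /valid hyz hw' Hw'.
have V2 : valid z y z' by rewrite /valid e_sym hyz hzz' eq_sym Hz'.
have := move_Q2 V1 V2 (Vp_all Hy V1) => Hin.
by apply/existsP; exists y; apply/existsP; exists z'; rewrite V2 Hin.
Qed.

Lemma closure_all (Hex : exists v u w, valid v u w) (x0 : KB) : x0 \in P ->
  forall y : KB, y \in P.
Proof.
move=> Hx0 y.
have [v0 [u0 [w0 [V0 E0]]]] := all_beta Hex x0.
have Hv0 : Vp v0.
  apply/existsP; exists u0; apply/existsP; exists w0; rewrite V0 /=.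
  by rewrite -(mkB_eq D V0 E0).
pose X := [set z | Vp z || [exists y, Vp y && e y z]].
have HX : forall z, z \in X.
  move=> z; apply: (@conn_closed T e e_sym e_conn X _ v0); last by rewrite inE Hv0.
  move=> a b; rewrite !inE => /orP[Ha|/existsP[c /andP[Hc hca]]] hab.
    by apply/orP; right; apply/existsP; exists a; rewrite Ha hab.
  case: (eqVneq b c) => [->|Hbc]; first by rewrite Hc.
  by apply/orP; right; apply/existsP; exists a; rewrite (Vp_step Hc hca hab Hbc) hab.
have [v [u [w [V E]]]] := all_beta Hex y.
rewrite (mkB_eq D V E); apply: Vp_all => //.
move: (HX v); rewrite inE => /orP[//|/existsP[c /andP[Hc hcv]]].
case/and3P: V => hu hw huw.
case: (eqVneq u c) => [Euc|Hu]; last exact: Vp_step Hc hcv hu Hu.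
have Hw : w != c by rewrite -Euc eq_sym.
exact: Vp_step Hc hcv hw Hw.
Qed.

End Closure.

End Main.

Section Deg.
Variable T : finType.
Variable e : rel T.
Hypothesis e_sym : symmetric e.
Hypothesis e_irr : irreflexive e.
Hypothesis e_conn : forall x y : T, connect e x y.
Hypothesis D1 : forall v a b c w, e v a -> e v b -> e v c -> a != b -> a != c -> b != c ->
  e v w -> [|| w == a, w == b | w == c].
Hypothesis D2 : forall v a b c x, e v a -> e v b -> e v c -> a != b -> a != c -> b != c ->
  e a x -> x = v.

Local Notation KB := (KBvert (Brel e)).
Local Notation valid := (valid e).

Lemma neq3 (a b c a' b' c' : T) : (a, b, c) != (a', b', c') -> a = a' -> b = b' -> c != c'.
Proof. by move=> H Ea Eb; subst; apply: contra H => /eqP ->. Qed.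

Lemma tri_pair v u w v1 u1 w1 v2 u2 w2 : valid v u w -> valid v1 u1 w1 -> valid v2 u2 w2 ->
  adjc v u w v1 u1 w1 -> adjc v u w v2 u2 w2 -> (v1, u1, w1) != (v2, u2, w2) ->
  ((v1, u1, w1) == (v, w, u)) || ((v2, u2, w2) == (v, w, u)).
Proof.
move=> V V1 V2 /andP[N1 A1] /andP[N2 A2] N12.
case/or3P: A1 => [Q1a|Q2a|/and3P[/eqP<- /eqP<- /eqP<-]]; last by rewrite eqxx.
all: case/or3P: A2 => [Q1b|Q2b|/and3P[/eqP<- /eqP<- /eqP<-]]; last by rewrite eqxx orbT.
all: exfalso; case/and3P: V => hu hw huw; case/and3P: V1 => h1u h1w h1uw;
  case/and3P: V2 => h2u h2w h2uw.
- case/andP: Q1a => /eqP E1 /eqP E2; subst v1 u1.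
  case/andP: Q1b => /eqP E1 /eqP E2; subst v2 u2.
  have n1 := neq3 N1 erefl erefl; have n2 := neq3 N2 erefl erefl.
  have n12 := neq3 N12 erefl erefl.
  move: (D1 hu hw h1w huw h1uw n1 h2w); rewrite (eq_sym w2 u) (negbTE h2uw).
  by rewrite (eq_sym w2 w) (negbTE n2) eq_sym (negbTE n12).
- case/andP: Q1a => /eqP E1 /eqP E2; subst v1 u1.
  case/andP: Q2b => /eqP E1 /eqP E2; subst v2 u2.
  have n1 := neq3 N1 erefl erefl.
  have := D2 hu hw h1w huw h1uw n1 h2w => E; subst w2.
  by rewrite eqxx in h2uw.
- case/andP: Q2a => /eqP E1 /eqP E2; subst v1 u1.
  case/andP: Q1b => /eqP E1 /eqP E2; subst v2 u2.
  have n2 := neq3 N2 erefl erefl.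
  have := D2 hu hw h2w huw h2uw n2 h1w => E; subst w1.
  by rewrite eqxx in h1uw.
- case/andP: Q2a => /eqP E1 /eqP E2; subst v1 u1.
  case/andP: Q2b => /eqP E1 /eqP E2; subst v2 u2.
  have n12 := neq3 N12 erefl erefl.
  have := D2 h1u h1w h2w h1uw h2uw n12 hw => E; subst w.
  by rewrite eqxx in huw.
Qed.

Lemma deg_bound (Hex : exists v u w, valid v u w) (x y1 y2 y3 : KB) :
  KBrel (Brel e) x y1 -> KBrel (Brel e) x y2 -> KBrel (Brel e) x y3 ->
  [|| y1 == y2, y1 == y3 | y2 == y3].
Proof.
move=> A1 A2 A3.
have [v [u [w [V E]]]] := all_beta e_sym e_irr e_conn Hex x.
have [v1 [u1 [w1 [V1 E1]]]] := all_beta e_sym e_irr e_conn Hex y1.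
have [v2 [u2 [w2 [V2 E2]]]] := all_beta e_sym e_irr e_conn Hex y2.
have [v3 [u3 [w3 [V3 E3]]]] := all_beta e_sym e_irr e_conn Hex y3.
rewrite (adj_val e_sym e_irr V V1 E E1) in A1.
rewrite (adj_val e_sym e_irr V V2 E E2) in A2.
rewrite (adj_val e_sym e_irr V V3 E E3) in A3.
have EQ : forall (S1 S2 : KB) a b c a' b' c', valid a b c -> valid a' b' c' ->
    val S1 = betaS e a b c -> val S2 = betaS e a' b' c' ->
    (S1 == S2) = ((a, b, c) == (a', b', c')).
  move=> S1 S2 a b c a' b' c' Va Vb Ea Eb; rewrite -val_eqE Ea Eb.
  by case/and3P: Va => ? ? ?; case/and3P: Vb => ? ? ?; apply: beta_inj.
rewrite (EQ _ _ _ _ _ _ _ _ V1 V2 E1 E2) (EQ _ _ _ _ _ _ _ _ V1 V3 E1 E3).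
rewrite (EQ _ _ _ _ _ _ _ _ V2 V3 E2 E3).
apply/negPn/negP; rewrite !negb_or => /and3P[n12 n13 n23].
have P12 := tri_pair V V1 V2 A1 A2 n12.
have P13 := tri_pair V V1 V3 A1 A3 n13.
have P23 := tri_pair V V2 V3 A2 A3 n23.
case/orP: P12 => /eqP H1.
  case/orP: P23 => /eqP H2; last by move: n13; rewrite H1 H2 eqxx.
  by move: n12; rewrite H1 H2 eqxx.
case/orP: P13 => /eqP H3; first by move: n12; rewrite H1 H3 eqxx.
by move: n23; rewrite H1 H3 eqxx.
Qed.

End Deg.

Ltac bh5 := repeat match goal with
  | H : is_true (_ && _) |- _ => let H1 := fresh "H" in let H2 := fresh "H" in case/andP: H => H1 H2
  | H : is_true (_ || _) |- _ => case/orP: H => H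
  | H : is_true ((_, _) == (_, _)) |- _ => rewrite xpair_eqE in H
  | H : is_true (?x != ?x) |- _ => by rewrite eqxx in H
  | H : ?x <> ?x |- _ => by case: H
  | H : is_true (?x == ?x) |- _ => clear H
  | H : is_true (~~ (_ || _)) |- _ => rewrite negb_or in H
  | H : is_true (~~ (_ && _)) |- _ => rewrite negb_and in H
  | H : is_true (~~ ~~ _) |- _ => rewrite negbK in H
  | H : is_true (?x == ?y) |- _ => move/eqP: H => H; first [subst x | subst y]
  | H : is_true false |- _ => by []
  end.
Ltac bfin5 := bh5; repeat (first [done | case: eqP => //= ?; subst; bh5]).

Section Neck.
Variable T : finType.
Variable e : rel T.
Hypothesis e_sym : symmetric e.
Hypothesis e_irr : irreflexive e.
Hypothesis e_conn : forall x y : T, connect e x y.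

Local Notation KB := (KBvert (Brel e)).
Local Notation valid := (valid e).

Definition tri (v a b c : T) (k : nat) : T * T * T :=
  match k with
  | 0 => (v, a, b) | 1 => (v, a, c) | 2 => (v, c, a) | 3 => (v, c, b) | 4 => (v, b, c)
  | _ => (v, b, a) end.

Definition adjt (t t' : T * T * T) := adjc t.1.1 t.1.2 t.2 t'.1.1 t'.1.2 t'.2.

Definition revi (k : nat) := match k with
  | 0 => 5 | 1 => 2 | 2 => 1 | 3 => 4 | 4 => 3 | _ => 0 end.

Lemma revi_lt k : k < 6 -> revi k < 6.
Proof. by case: k => [|[|[|[|[|[|k]]]]]]. Qed.

Lemma tri_rev v a b c k : k < 6 ->
  tri v a b c (revi k) = ((tri v a b c k).1.1, (tri v a b c k).2, (tri v a b c k).1.2).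
Proof. by case: k => [|[|[|[|[|[|k]]]]]]. Qed.

Lemma adj_center (x y z v p q : T) : adjc x y z v p q -> (x, y, z) != (v, q, p) ->
  ((x == v) && (y == p)) || ((x == p) && (y == v)).
Proof.
case/andP => _ /or3P[->|->|H] //; rewrite ?orbT //.
by case/and3P: H => /eqP-> /eqP-> /eqP->; rewrite eqxx.
Qed.

Lemma two_centers (x y v p p' : T) : p != p' -> v != p -> v != p' ->
  ((x == v) && (y == p)) || ((x == p) && (y == v)) ->
  ((x == v) && (y == p')) || ((x == p') && (y == v)) -> False.
Proof. move=> *; bfin5. Qed.

Lemma necklace_gen v a b c p q s :
  e v a -> e v b -> e v c -> a != b -> a != c -> b != c -> valid p q s ->
  (forall k : 'I_6, adjt (tri v a b c k) (p, q, s) = (k <= 1)) ->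
  (forall k : 'I_6, tri v a b c k != (p, q, s)) ->
  has_good_necklace (KBrel (Brel e)).
Proof.
move=> ha hb hc nab nac nbc Vd Hd Hd'.
have nva := e_neq e_irr ha; have nvb := e_neq e_irr hb; have nvc := e_neq e_irr hc.
have Vt : forall k, valid (tri v a b c k).1.1 (tri v a b c k).1.2 (tri v a b c k).2.
  move=> [|[|[|[|[|k]]]]]; rewrite /valid /= ?ha ?hb ?hc //= eq_sym //.
have Hex : exists v0 u0 w0, valid v0 u0 w0 by exists v, a, b; apply: (Vt 0).
pose D0 : KB := exist _ (betaS e v a b) (beta_biclique e_sym e_irr ha hb nab).
pose ct k := mkB D0 (tri v a b c k).1.1 (tri v a b c k).1.2 (tri v a b c k).2.
exists 6, 1, (fun i : 'I_6 => ct i), (fun _ : 'I_1 => mkB D0 p q s).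
have F1 : (a == b) = false by apply: negbTE.
have F2 : (a == c) = false by apply: negbTE.
have F3 : (b == c) = false by apply: negbTE.
have F4 : (v == a) = false by apply: negbTE.
have F5 : (v == b) = false by apply: negbTE.
have F6 : (v == c) = false by apply: negbTE.
have G1 : (b == a) = false by rewrite eq_sym.
have G2 : (c == a) = false by rewrite eq_sym.
have G3 : (c == b) = false by rewrite eq_sym.
have G4 : (a == v) = false by rewrite eq_sym.
have G5 : (b == v) = false by rewrite eq_sym.
have G6 : (c == v) = false by rewrite eq_sym.
split; split.
- by [].
- by [].
- move=> i j /eqP; rewrite /ct eq_mkB //.
  case: i => [[|[|[|[|[|[|i]]]]]] Hi] //; case: j => [[|[|[|[|[|[|j]]]]]] Hj] //;
  move=> H; apply: val_inj => //=; move: H;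
  rewrite /= !xpair_eqE ?eqxx ?F1 ?F2 ?F3 ?F4 ?F5 ?F6 ?G1 ?G2 ?G3 ?G4 ?G5 ?G6 /= ?andbF //.
- by move=> i j _; rewrite (ord1 i) (ord1 j).
- by move=> i j; rewrite /ct eq_mkB //; apply: Hd'.
- move=> i j; rewrite /ct adj_mkB //.
  case: i => [[|[|[|[|[|[|i]]]]]] Hi] //; case: j => [[|[|[|[|[|[|j]]]]]] Hj] //;
  rewrite /adjc /cyc_adj ?modnn ?modn_small //=;
  rewrite !xpair_eqE ?eqxx ?F1 ?F2 ?F3 ?F4 ?F5 ?F6 ?G1 ?G2 ?G3 ?G4 ?G5 ?G6 /= ?andbF //.
- by move=> j j'; rewrite (ord1 j) (ord1 j') KBrel_irr.
- by move=> i j; rewrite /ct adj_mkB //; apply: Hd.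
move=> S Hout i j l Hj Hl A1 A2.
have [x [y [z [V E]]]] := all_beta e_sym e_irr e_conn Hex S.
have O : forall k, k < 6 -> (x, y, z) != tri v a b c k.
  by move=> k Hk; have := Hout (Ordinal Hk); rewrite (mkB_eq e_sym e_irr D0 V E) /ct eq_mkB //.
have Orev : forall k, k < 6 -> (x, y, z) != ((tri v a b c k).1.1, (tri v a b c k).2, (tri v a b c k).1.2).
  move=> k Hk; have := O (revi k) (revi_lt Hk); rewrite tri_rev //.
rewrite /ct (adj_val e_sym e_irr V (Vt _) E (val_mkB e_sym e_irr _ (Vt _))) in A1.
rewrite /ct (adj_val e_sym e_irr V (Vt _) E (val_mkB e_sym e_irr _ (Vt _))) in A2.
have C1 := adj_center A1 (Orev i (ltn_ord i)).
have C2 := adj_center A2 (Orev l (ltn_ord l)).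
exfalso.
case: i Hj C1 {A1} => [[|[|[|[|[|[|i]]]]]] Hi] // Hj C1; rewrite ?modnn ?modn_small // in Hj;
  rewrite Hj in Hl; rewrite ?modnn ?modn_small // in Hl; rewrite Hl /= in C2; rewrite /= in C1;
  apply: (two_centers _ _ _ C1 C2) => //; by rewrite eq_sym.
Qed.

End Neck.

Ltac bh6 := repeat match goal with
  | H : is_true (_ && _) |- _ => let H1 := fresh "H" in let H2 := fresh "H" in case/andP: H => H1 H2
  | H : is_true (_ || _) |- _ => case/orP: H => H
  | H : is_true ((_, _) == (_, _)) |- _ => rewrite xpair_eqE in H
  | H : is_true (?x != ?x) |- _ => by rewrite eqxx in H
  | H : ?x <> ?x |- _ => by case: H
  | H : is_true (?x == ?x) |- _ => clear H
  | H : is_true (?r ?x ?x), I : irreflexive ?r |- _ => by rewrite I in H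
  | H : is_true (~~ (_ || _)) |- _ => rewrite negb_or in H
  | H : is_true (~~ (_ && _)) |- _ => rewrite negb_and in H
  | H : is_true (~~ ~~ _) |- _ => rewrite negbK in H
  | H : is_true (?x == ?y) |- _ => move/eqP: H => H; first [subst x | subst y]
  | H : is_true false |- _ => by []
  end.
Ltac bfin6 := bh6; repeat (first [done | case: eqP => //= ?; subst; bh6]).

Section K2.
Variable T : finType.
Variable e : rel T.
Hypothesis e_sym : symmetric e.
Hypothesis e_irr : irreflexive e.
Hypothesis e_conn : forall x y : T, connect e x y.
Hypothesis ND : forall v u w, e v u -> e v w -> u = w.

Local Notation KB := (KBvert (Brel e)).

Lemma pair_cbip x y : e x y -> is_cbip (Brel e) (pairS e x y).
Proof.
move=> hxy; have hyx : e y x by rewrite e_sym.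
have nxy := e_neq e_irr hxy.
apply/existsP; exists [set z | val z == (x, y)].
apply/and5P; split.
- by apply/subsetP => z; rewrite !inE => ->.
- by apply/set0Pn; exists (mkA hxy); rewrite inE.
- by apply/set0Pn; exists (mkA hyx); rewrite !inE /= !xpair_eqE; bfin6.
- apply/forall_inP => a Ha; apply/forall_inP => b Hb; move: Ha Hb; rewrite !inE.
  case: a => [[a1 a2] ha]; case: b => [[b1 b2] hb]; rewrite /Brel /= => *; bfin6.
apply/andP; split.
- apply/forall_inP => a Ha; apply/forall_inP => b Hb; move: Ha Hb nxy; rewrite !inE.
  case: a => [[a1 a2] ha]; case: b => [[b1 b2] hb]; rewrite /Brel /= => *; bfin6.
- apply/forall_inP => a Ha; apply/forall_inP => b Hb; move: Ha Hb nxy; rewrite !inE.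
  case: a => [[a1 a2] ha]; case: b => [[b1 b2] hb]; rewrite /Brel /= => *; bfin6.
Qed.

Lemma pair_card x y (hxy : e x y) : #|pairS e x y| = 2.
Proof.
have hyx : e y x by rewrite e_sym.
have nxy := e_neq e_irr hxy.
have -> : pairS e x y = [set mkA hxy; mkA hyx].
  by apply/setP => z; rewrite !inE !eq_mkA.
by rewrite cards2 -val_eqE /= xpair_eqE negb_and nxy.
Qed.

Lemma pair_biclique x y : e x y -> biclique (Brel e) (pairS e x y).
Proof.
move=> hxy; apply/andP; split; first exact: pair_cbip.
apply/forallP => S'; apply/implyP => /andP[Hsub Hc].
case/(cbip_shape e_irr): Hc => [[a [b [_ HS]]]|[X [Y [Z [H HS]]]]]; rewrite HS in Hsub *.
  by rewrite eq_sym eqEcard Hsub pair_card // cards2; case: (a != b).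
exfalso; case/and3P: H => /eqP H1 H2 _.
have h1 := valP X; have h2 := valP Y; rewrite /= -H1 in h2.
by move: H2; rewrite (ND h1 h2) eqxx.
Qed.

Lemma K2_path x y : e x y -> is_path (KBrel (Brel e)).
Proof.
move=> hxy.
pose S0 : KB := exist _ (pairS e x y) (pair_biclique hxy).
have Hall : forall z, z \in [set x; y].
  move=> z; apply: (@conn_closed T e e_sym e_conn _ _ x); last by rewrite !inE eqxx.
  move=> a b; rewrite !inE => /orP[/eqP->|/eqP->] hab.
  - by rewrite (ND hxy hab) eqxx orbT.
  - by rewrite (ND (etrans (e_sym _ _) hxy) hab) eqxx.
have Huniq : forall S : KB, S = S0.
  move=> S; apply: val_inj => /=.
  case: (biclique_char e_sym e_irr (valP S)) => [[v [u [w [hu hw huw _]]]]|].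
    by move: huw; rewrite (ND hu hw) eqxx.
  case=> v [u [hu _ _ ->]].
  have Hv := Hall v; have Hu := Hall u; have nvu := e_neq e_irr hu.
  move: Hv Hu nvu; rewrite !inE => /orP[/eqP->|/eqP->] /orP[/eqP->|/eqP->];
    rewrite ?eqxx // => _; apply/setP => z; rewrite !inE orbC //.
exists 1, (fun _ => S0); split => //.
- by exists (fun _ => ord0) => [i|S]; [rewrite (ord1 i) | rewrite (Huniq S)].
- by move=> i j; rewrite (ord1 i) (ord1 j) KBrel_irr.
Qed.

End K2.

Ltac bh7 := repeat match goal with
  | H : is_true (_ && _) |- _ => let H1 := fresh "H" in let H2 := fresh "H" in case/andP: H => H1 H2
  | H : is_true (_ || _) |- _ => case/orP: H => H
  | H : is_true ((_, _) == (_, _)) |- _ => rewrite xpair_eqE in H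
  | H : is_true (?x != ?x) |- _ => by rewrite eqxx in H
  | H : ?x <> ?x |- _ => by case: H
  | H : is_true (?x == ?x) |- _ => clear H
  | H : is_true (~~ (_ || _)) |- _ => rewrite negb_or in H
  | H : is_true (~~ (_ && _)) |- _ => rewrite negb_and in H
  | H : is_true (~~ ~~ _) |- _ => rewrite negbK in H
  | H : is_true (?x == ?y) |- _ => move/eqP: H => H; first [subst x | subst y]
  | H : is_true false |- _ => by []
  end.
Ltac bfin7 := bh7; repeat (first [done | case: eqP => //= ?; subst; bh7]).

Theorem mainTheorem17 (T : finType) (e : rel T)
    (e_sym : symmetric e) (e_irr : irreflexive e)
    (e_conn : forall x y : T, connect e x y)
    (e_edge : exists x y : T, e x y) :
  is_cycle (KBrel (Brel e)) \/ is_path (KBrel (Brel e)) \/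
  has_good_necklace (KBrel (Brel e)).
Proof.
case: (classic (exists v a b c, [/\ e v a, e v b, e v c, a != b & a != c] /\ b != c /\
   ((exists w, e v w /\ [&& w != a, w != b & w != c]) \/ (exists x, e a x /\ x != v)))).
  case=> v [a [b [c [[ha hb hc nab nac] [nbc [[w [hw Hw]]|[x [hx Hx]]]]]]]]; right; right.
  - have nvw := e_neq e_irr hw.
    case/and3P: Hw => nwa nwb nwc.
    apply: (necklace_gen e_sym e_irr e_conn (p := v) (q := a) (s := w) ha hb hc nab nac nbc).
    + by rewrite /valid ha hw eq_sym nwa.
    + have nva := e_neq e_irr ha; have nvb := e_neq e_irr hb; have nvc := e_neq e_irr hc.
      move=> [[|[|[|[|[|[|k]]]]]] Hk] //; rewrite /adjt /adjc /= !xpair_eqE; bfin7.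
    + have nva := e_neq e_irr ha; have nvb := e_neq e_irr hb; have nvc := e_neq e_irr hc.
      move=> [[|[|[|[|[|[|k]]]]]] Hk] //; rewrite /= !xpair_eqE; bfin7.
  - have nva := e_neq e_irr ha; have nvb := e_neq e_irr hb; have nvc := e_neq e_irr hc.
    have nax := e_neq e_irr hx.
    apply: (necklace_gen e_sym e_irr e_conn (p := a) (q := v) (s := x) ha hb hc nab nac nbc).
    + by rewrite /valid e_sym ha hx eq_sym Hx.
    + move=> [[|[|[|[|[|[|k]]]]]] Hk] //; rewrite /adjt /adjc /= !xpair_eqE; bfin7.
    + move=> [[|[|[|[|[|[|k]]]]]] Hk] //; rewrite /= !xpair_eqE; bfin7.
move=> NNC.
have D1 : forall v a b c w, e v a -> e v b -> e v c -> a != b -> a != c -> b != c ->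
    e v w -> [|| w == a, w == b | w == c].
  move=> v a b c w ha hb hc nab nac nbc hw; apply/negPn/negP; rewrite !negb_or => Hw.
  by apply: NNC; exists v, a, b, c; split => //; split => //; left; exists w.
have D2 : forall v a b c x, e v a -> e v b -> e v c -> a != b -> a != c -> b != c ->
    e a x -> x = v.
  move=> v a b c x ha hb hc nab nac nbc hx; apply/eqP/negPn/negP => Hx.
  by apply: NNC; exists v, a, b, c; split => //; split => //; right; exists x.
case: (classic (exists v u w, valid e v u w)) => [Hex|NHex]; last first.
  right; left; case: e_edge => x [y hxy].
  apply: (K2_path e_sym e_irr e_conn _ hxy) => v u w hu hw.
  apply/eqP/negPn/negP => Huw; apply: NHex; exists v, u, w.
  by rewrite /valid hu hw Huw.
case: (Hex) => v [u [w Vt]].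
case/and3P: (Vt) => hu hw huw.
pose x0 : KBvert (Brel e) := exist _ (betaS e v u w) (beta_biclique e_sym e_irr hu hw huw).
have Hcl : forall P : {set KBvert (Brel e)},
    (forall x y, x \in P -> KBrel (Brel e) x y -> y \in P) -> forall x, x \in P -> forall y, y \in P.
  move=> P HP y Hy z; exact: (@closure_all T e e_sym e_irr e_conn y P HP Hex y Hy z).
case: (deg2_main (@KBrel_sym _ (Brel e)) (@KBrel_irr _ (Brel e))
  (deg_bound e_sym e_irr e_conn D1 D2 Hex) Hcl x0) => H; [right; left | left]; exact: H.
Qed.
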